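(* Let $F:\mathbb{R}\to\mathbb{R}^3$ be a smooth, periodic (closed) regular curve, with period interval $I$, having nowhere vanishing Euclidean curvature $k$ and such that $f=\chi\circ F$ is a $1$-generic curve in $\mathbb{Q}_3$, i.e. $(k')^2+k^2\tau^2\neq0$ everywhere, where $\tau$ is the Euclidean torsion and $'=d/ds_e$ with $s_e$ the Euclidean arclength. Let $s$ be the conformal arclength and $\mu_2$ the second conformal curvature of $f$. Then $$\frac1{2\pi}\int_I\mu_2\,ds\equiv\frac1{2\pi}\int_I\tau\,ds_e\pmod{\mathbb{Z}}.$$ In particular the total twist $\mathrm{Tw}(F)=\frac1{2\pi}\int_I\tau\,ds_e\ (\mathrm{mod}\ \mathbb{Z})$ is invariant under conformal (Möbius) transformations.
   Context: $\chi:\mathbb{R}^3\to\mathbb{Q}_3$, $\chi(x)=[1:x:\tfrac12|x|^2]$, is the conformal embedding of $\mathbb{R}^3$ into the conformal sphere $\mathbb{Q}_3$ = projectivization of the null cone of $\langle v,w\rangle=\sum_{A=1}^3v^Aw^A-v^0w^4-v^4w^0$ on $\mathbb{R}^5$; $\mathrm{M\ddot{o}b}(3)$ is the identity component of the isometry group of this form. For a 1-generic curve $f$ in $\mathbb{Q}_3$ there is a Frenet frame $e:I\to\mathrm{M\ddot{o}b}(3)$, $[e_0]=f$, and smooth functions $\mu_1,\mu_2$ (of arbitrary sign) such that, with $\dot{}=d/ds$: $\dot e_0=e_1$, $\dot e_1=\mu_1e_0+e_4$, $\dot e_2=e_0+\mu_2e_3$, $\dot e_3=-\mu_2e_2$,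 $\dot e_4=\mu_1e_1+e_2$; here $s$ is the conformal arclength and $\mu_1,\mu_2$ are the conformal curvatures. *)

(* Defs.v *)
From Stdlib Require Import Reals ZArith.
Open Scope R_scope.

(* Vectors of R^5 are functions nat -> R; only indices 0..4 matter. *)
Definition R5 := nat -> R.

Definition lor (v w : R5) : R :=
  v 1%nat * w 1%nat + v 2%nat * w 2%nat + v 3%nat * w 3%nat
  - v 0%nat * w 4%nat - v 4%nat * w 0%nat.

Definition std (A : nat) : R5 := fun i => if Nat.eqb i A then 1 else 0.

(* A frame / 5x5 matrix, given by its columns: M A = M eps_A = e_A. *)
Definition frame := nat -> R5.

Definition is_isometry (M : frame) : Prop :=
  forall A B : nat, (A <= 4)%nat -> (B <= 4)%nat ->
    lor (M A) (M B) = lor (std A) (std B).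

(* Mob(3): identity component of the isometry group, i.e. the isometries
   joined to the identity by a continuous path of isometries. *)
Definition Mob3 (M : frame) : Prop :=
  exists gamma : R -> frame,
    (forall A i : nat, continuity (fun t => gamma t A i)) /\
    (forall A i : nat, (A <= 4)%nat -> (i <= 4)%nat ->
        gamma 0 A i = std A i /\ gamma 1 A i = M A i) /\
    (forall t, 0 <= t <= 1 -> is_isometry (gamma t)).

(* ---------- Euclidean R^3 (indices 1..3, as in the paper) ---------- *)
Definition R3 := nat -> R.

Definition dot3 (u v : R3) : R :=
  u 1%nat * v 1%nat + u 2%nat * v 2%nat + u 3%nat * v 3%nat.

Definition cross3 (u v : R3) : R3 := fun i =>
  match i with
  | 1%nat => u 2%nat * v 3%nat - u 3%nat * v 2%nat
  | 2%nat => u 3%nat * v 1%nat - u 1%nat * v 3%nat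
  | 3%nat => u 1%nat * v 2%nat - u 2%nat * v 1%nat
  | _ => 0
  end.

Definition norm3 (u : R3) : R := sqrt (dot3 u u).

Definition det3 (u v w : R3) : R := dot3 (cross3 u v) w.

(* conformal embedding chi(x) = [1 : x : |x|^2/2] (a representative in R^5) *)
Definition chi (x : R3) : R5 := fun i =>
  match i with
  | 0%nat => 1
  | 1%nat | 2%nat | 3%nat => x i
  | 4%nat => / 2 * dot3 x x
  | _ => 0
  end.

Definition is_smooth (f : R -> R) : Prop :=
  exists D : nat -> R -> R, D 0%nat = f /\
    forall (n : nat) (x : R), derivable_pt_lim (D n) x (D (S n) x).

(* A smooth curve in R^3 is given by the tower Fd of its derivatives:
   Fd n t = n-th derivative of F at t (componentwise). *)
Definition smooth_curve_tower (Fd : nat -> R -> R3) : Prop :=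
  forall (n i : nat) (t : R), (1 <= i <= 3)%nat ->
    derivable_pt_lim (fun u => Fd n u i) t (Fd (S n) t i).

Definition curvature (Fd : nat -> R -> R3) (t : R) : R :=
  norm3 (cross3 (Fd 1%nat t) (Fd 2%nat t)) / (norm3 (Fd 1%nat t)) ^ 3.

Definition torsion (Fd : nat -> R -> R3) (t : R) : R :=
  det3 (Fd 1%nat t) (Fd 2%nat t) (Fd 3%nat t)
    / (norm3 (cross3 (Fd 1%nat t) (Fd 2%nat t))) ^ 2.

Definition conformal_frenet (e : R -> frame) (mu1 mu2 : R -> R) : Prop :=
  forall (s : R) (i : nat), (i <= 4)%nat ->
    derivable_pt_lim (fun u => e u 0%nat i) s (e s 1%nat i) /\
    derivable_pt_lim (fun u => e u 1%nat i) s
      (mu1 s * e s 0%nat i + e s 4%nat i) /\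
    derivable_pt_lim (fun u => e u 2%nat i) s
      (e s 0%nat i + mu2 s * e s 3%nat i) /\
    derivable_pt_lim (fun u => e u 3%nat i) s (- mu2 s * e s 2%nat i) /\
    derivable_pt_lim (fun u => e u 4%nat i) s
      (mu1 s * e s 1%nat i + e s 2%nat i).

(* Main.v *)
Require Import Defs.
From Stdlib Require Import Reals ZArith.
From Stdlib Require Import Lra Lia Psatz FunctionalExtensionality.
Open Scope R_scope.

Lemma dl_eq f x a b : derivable_pt_lim f x a -> a = b -> derivable_pt_lim f x b.
Proof. intros H ->; exact H. Qed.
Lemma dl_plus f g x a b : derivable_pt_lim f x a -> derivable_pt_lim g x b ->
  derivable_pt_lim (fun s => f s + g s) x (a + b).
Proof. intros; exact (derivable_pt_lim_plus f g x a b H H0). Qed.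
Lemma dl_minus f g x a b : derivable_pt_lim f x a -> derivable_pt_lim g x b ->
  derivable_pt_lim (fun s => f s - g s) x (a - b).
Proof. intros; exact (derivable_pt_lim_minus f g x a b H H0). Qed.
Lemma dl_mult f g x a b : derivable_pt_lim f x a -> derivable_pt_lim g x b ->
  derivable_pt_lim (fun s => f s * g s) x (a * g x + f x * b).
Proof. intros; exact (derivable_pt_lim_mult f g x a b H H0). Qed.
Lemma dl_const c x : derivable_pt_lim (fun _ => c) x 0.
Proof. exact (derivable_pt_lim_const c x). Qed.
Lemma dl_id x : derivable_pt_lim (fun s => s) x 1.
Proof. exact (derivable_pt_lim_id x). Qed.
Lemma dl_opp f x a : derivable_pt_lim f x a -> derivable_pt_lim (fun s => - f s) x (- a).
Proof. intros; exact (derivable_pt_lim_opp f x a H). Qed.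
Lemma dl_inv f x a : derivable_pt_lim f x a -> f x <> 0 ->
  derivable_pt_lim (fun s => / f s) x (- a / (f x)^2).
Proof. intros H H0.
  pose (pr := exist (fun l => derivable_pt_lim f x l) a H : derivable_pt f x).
  apply (derive_pt_eq_1 _ _ _ (derivable_pt_inv f x H0 pr)).
  rewrite derive_pt_inv. unfold pr; simpl. unfold Rsqr; field; auto. Qed.
Lemma dl_div f g x a b : derivable_pt_lim f x a -> derivable_pt_lim g x b -> g x <> 0 ->
  derivable_pt_lim (fun s => f s / g s) x ((a * g x - f x * b) / (g x)^2).
Proof. intros. eapply dl_eq. { apply (dl_mult f (fun s => / g s)); [exact H| apply dl_inv; eauto]. }
  simpl; field; auto. Qed.
Lemma dl_sqrt f x a : derivable_pt_lim f x a -> 0 < f x ->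
  derivable_pt_lim (fun s => sqrt (f s)) x (a / (2 * sqrt (f x))).
Proof. intros. eapply dl_eq.
  - exact (derivable_pt_lim_comp f sqrt x a _ H (derivable_pt_lim_sqrt _ H0)).
  - field. apply Rgt_not_eq, sqrt_lt_R0; auto. Qed.
Lemma dl_ext f g x a : (forall s, f s = g s) -> derivable_pt_lim f x a -> derivable_pt_lim g x a.
Proof. intros H H1. replace g with f; auto. apply functional_extensionality; auto. Qed.
Lemma dl_unique f x a b : derivable_pt_lim f x a -> derivable_pt_lim f x b -> a = b.
Proof. apply uniqueness_limite. Qed.
Lemma dl_shift f x a L : derivable_pt_lim f (x + L) a -> derivable_pt_lim (fun s => f (s + L)) x a.
Proof. intros. eapply dl_eq.
  - apply (derivable_pt_lim_comp (fun s => s + L) f x 1 a).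
    + eapply dl_eq. apply dl_plus. apply dl_id. apply dl_const. ring.
    + exact H.
  - ring. Qed.

Ltac dl_auto := repeat first [ apply dl_plus | apply dl_minus | apply dl_mult | apply dl_opp
   | apply dl_const | apply dl_id ].

Lemma lor_ext v v' w w' : (forall i, (i<=4)%nat -> v i = v' i) ->
  (forall i, (i<=4)%nat -> w i = w' i) -> lor v w = lor v' w'.
Proof. intros Hv Hw; unfold lor; rewrite !Hv, !Hw by lia; reflexivity. Qed.
Lemma lor_sym v w : lor v w = lor w v.
Proof. unfold lor; ring. Qed.

Lemma lor_deriv (v w : R -> R5) (dv dw : R5) t :
 (forall i, (i<=4)%nat -> derivable_pt_lim (fun s => v s i) t (dv i)) ->
 (forall i, (i<=4)%nat -> derivable_pt_lim (fun s => w s i) t (dw i)) ->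
 derivable_pt_lim (fun s => lor (v s) (w s)) t (lor dv (w t) + lor (v t) dw).
Proof. intros Hv Hw. unfold lor. eapply dl_eq.
  { repeat first [ apply dl_plus | apply dl_minus | apply dl_mult | apply dl_opp | (apply Hv; lia) | (apply Hw; lia)]. }
  cbv beta; ring. Qed.

Lemma lor_deriv0 (v w : R -> R5) (dv dw : R5) t :
 (forall i, (i<=4)%nat -> derivable_pt_lim (fun s => v s i) t (dv i)) ->
 (forall i, (i<=4)%nat -> derivable_pt_lim (fun s => w s i) t (dw i)) ->
 (forall s, lor (v s) (w s) = 0) ->
 lor dv (w t) + lor (v t) dw = 0.
Proof. intros Hv Hw H0. eapply dl_unique. apply lor_deriv; eauto.
  apply (dl_ext (fun _ => 0)). intros; rewrite H0; auto. apply dl_const. Qed.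

Fixpoint sgn (k:nat) : R := match k with O => 1 | S k => - sgn k end.
Definition skip (j k : nat) : nat := if Nat.ltb k j then k else S k.
Fixpoint lapl (d : (nat -> nat -> R) -> R) (m : nat -> nat -> R) (j : nat) : R :=
  match j with O => 0 | S j' => lapl d m j' + sgn j' * m 0%nat j' * d (fun a b => m (S a) (skip j' b)) end.
Fixpoint detn (n : nat) (m : nat -> nat -> R) : R :=
  match n with O => 1 | S n' => lapl (detn n') m n end.
Definition mul5 (a b : nat -> nat -> R) (i j : nat) : R :=
  a i 0%nat * b 0%nat j + a i 1%nat * b 1%nat j + a i 2%nat * b 2%nat j
  + a i 3%nat * b 3%nat j + a i 4%nat * b 4%nat j.

Lemma det_mul5 a b : detn 5 (mul5 a b) = detn 5 a * detn 5 b.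
Proof. unfold mul5. simpl. unfold skip; simpl. ring. Qed.

Lemma skip_lt j k n : (j < S n)%nat -> (k < n)%nat -> (skip j k < S n)%nat.
Proof. unfold skip; intros; destruct (Nat.ltb_spec k j); lia. Qed.

Lemma detn_ext n : forall m m', (forall i j, (i < n)%nat -> (j < n)%nat -> m i j = m' i j) ->
  detn n m = detn n m'.
Proof. induction n; intros m m' H. reflexivity.
  change (lapl (detn n) m (S n) = lapl (detn n) m' (S n)).
  assert (forall j, (j <= S n)%nat -> lapl (detn n) m j = lapl (detn n) m' j) as HL.
  { induction j; intros Hj; simpl; auto. rewrite IHj by lia. rewrite (H 0%nat j) by lia.
    f_equal. f_equal. apply IHn. intros; apply H; [lia| apply skip_lt; lia]. }
  apply HL; lia. Qed.

Lemma detn_cont n : forall m : R -> nat -> nat -> R, (forall i j, continuity (fun t => m t i j)) ->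
  continuity (fun t => detn n (m t)).
Proof. induction n; intros m H.
  - apply continuity_const. intros ? ?; auto.
  - change (continuity (fun t => lapl (detn n) (m t) (S n))).
    assert (forall j, continuity (fun t => lapl (detn n) (m t) j)) as HL.
    { induction j; simpl. apply continuity_const; intros ? ?; auto.
      apply continuity_plus; auto. apply continuity_mult.
      apply continuity_mult; auto. apply continuity_const; intros ? ?; auto.
      apply (IHn (fun t a b => m t (S a) (skip j b))). intros; apply H. }
    apply HL. Qed.

Definition idm (i j : nat) : R := if Nat.eqb i j then 1 else 0.
Lemma det_idm : detn 5 idm = 1.
Proof. simpl. unfold skip, idm; simpl. ring. Qed.

Definition matof (M : frame) (k A : nat) : R := M A k.
Definition Jv (v : R5) (k : nat) : R :=
  match k with 0%nat => - v 4%nat | 4%nat => - v 0%nat | _ => v k end.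
Definition Nmat (M : frame) (A k : nat) : R :=
  match A with 0%nat => - Jv (M 4%nat) k | 4%nat => - Jv (M 0%nat) k | _ => Jv (M A) k end.

Lemma iso_inv M : is_isometry M -> forall A B, (A < 5)%nat -> (B < 5)%nat ->
  mul5 (Nmat M) (matof M) A B = idm A B.
Proof. intros H A B HA HB.
  assert (HL : forall A B, (A <= 4)%nat -> (B <= 4)%nat ->
     M B 1%nat * M A 1%nat + M B 2%nat * M A 2%nat + M B 3%nat * M A 3%nat
     - M B 0%nat * M A 4%nat - M B 4%nat * M A 0%nat = lor (std B) (std A)).
  { intros. rewrite <- H by lia. reflexivity. }
  assert (H1 := HL A B ltac:(lia) ltac:(lia)).
  assert (H2 := HL 4%nat B ltac:(lia) ltac:(lia)).
  assert (H3 := HL 0%nat B ltac:(lia) ltac:(lia)).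
  unfold mul5, matof, Nmat, Jv, idm.
  destruct A as [|[|[|[|[|A]]]]]; try lia; destruct B as [|[|[|[|[|B]]]]]; try lia;
  unfold lor, std in *; simpl in *; lra.
Qed.

Lemma iso_det M : is_isometry M -> detn 5 (matof M) <> 0.
Proof. intros H E.
  assert (detn 5 (mul5 (Nmat M) (matof M)) = 1).
  { rewrite <- det_idm. apply detn_ext. intros; apply iso_inv; auto. }
  rewrite det_mul5, E in H0. lra. Qed.

Lemma mob_iso M : Mob3 M -> is_isometry M.
Proof. intros [g [Hc [Hb Hi]]]. intros A B HA HB.
  rewrite <- (Hi 1 ltac:(lra) A B HA HB). apply lor_ext; intros; symmetry; apply Hb; auto. Qed.

Lemma IVT_pos (f : R -> R) : continuity f -> 0 < f 0 ->
  (forall t, 0 <= t <= 1 -> f t <> 0) -> 0 < f 1.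
Proof. intros Hc H0 Hn. destruct (Rlt_le_dec 0 (f 1)) as [h|h]; auto.
  destruct h as [h|h]; [|exfalso; apply (Hn 1); auto; lra].
  destruct (IVT (fun t => - f t) 0 1) as [z [Hz Hz0]].
  - apply continuity_opp; auto.
  - lra.
  - lra.
  - lra.
  - exfalso; apply (Hn z Hz); lra. Qed.

Lemma mob_det M : Mob3 M -> 0 < detn 5 (matof M).
Proof. intros HM. pose proof HM as [g [Hc [Hb Hi]]].
  assert (E1 : detn 5 (matof M) = detn 5 (matof (g 1))).
  { apply detn_ext; intros; unfold matof; symmetry; apply (Hb j i); lia. }
  rewrite E1.
  apply (IVT_pos (fun t => detn 5 (matof (g t)))).
  - apply (detn_cont 5 (fun t => matof (g t))). intros; unfold matof; apply Hc.
  - replace (detn 5 (matof (g 0))) with (detn 5 idm). rewrite det_idm; lra.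
    apply detn_ext; intros; unfold matof, idm; rewrite (proj1 (Hb j i ltac:(lia) ltac:(lia))).
    unfold std. destruct (Nat.eqb_spec i j), (Nat.eqb_spec j i); auto; lia.
  - intros; apply iso_det; auto. Qed.

Lemma iso_time M : is_isometry M -> M 0%nat 0%nat + M 0%nat 4%nat <> 0.
Proof. intros H E.
  pose proof (H 0%nat 0%nat ltac:(lia) ltac:(lia)) as H00.
  pose proof (H 0%nat 4%nat ltac:(lia) ltac:(lia)) as H04.
  unfold lor, std in *; simpl in *.
  assert (M 0%nat 4%nat = - M 0%nat 0%nat) by lra.
  rewrite H0 in H00.
  assert (M 0%nat 0%nat = 0) by nra.
  assert (M 0%nat 1%nat = 0) by nra.
  assert (M 0%nat 2%nat = 0) by nra.
  assert (M 0%nat 3%nat = 0) by nra.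
  rewrite H0, H1, H2, H3, H4 in H04. lra. Qed.

Lemma mob_time M : Mob3 M -> 0 < M 0%nat 0%nat + M 0%nat 4%nat.
Proof. intros HM. pose proof HM as [g [Hc [Hb Hi]]].
  rewrite <- (proj2 (Hb 0%nat 0%nat ltac:(lia) ltac:(lia))), <- (proj2 (Hb 0%nat 4%nat ltac:(lia) ltac:(lia))).
  apply (IVT_pos (fun t => g t 0%nat 0%nat + g t 0%nat 4%nat)).
  - apply continuity_plus; apply Hc.
  - rewrite (proj1 (Hb 0%nat 0%nat ltac:(lia) ltac:(lia))), (proj1 (Hb 0%nat 4%nat ltac:(lia) ltac:(lia))).
    unfold std; simpl; lra.
  - intros; apply iso_time; auto. Qed.

Lemma iso_vals M : is_isometry M ->
  lor (M 0%nat) (M 0%nat) = 0 /\ lor (M 1%nat) (M 1%nat) = 1 /\ lor (M 2%nat) (M 2%nat) = 1 /\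
  lor (M 3%nat) (M 3%nat) = 1 /\ lor (M 4%nat) (M 4%nat) = 0 /\ lor (M 0%nat) (M 4%nat) = -1 /\
  lor (M 0%nat) (M 1%nat) = 0 /\ lor (M 0%nat) (M 2%nat) = 0 /\ lor (M 0%nat) (M 3%nat) = 0 /\
  lor (M 1%nat) (M 2%nat) = 0 /\ lor (M 1%nat) (M 3%nat) = 0 /\ lor (M 1%nat) (M 4%nat) = 0 /\
  lor (M 2%nat) (M 3%nat) = 0 /\ lor (M 2%nat) (M 4%nat) = 0 /\ lor (M 3%nat) (M 4%nat) = 0.
Proof. intros H. repeat split; rewrite H by lia; unfold lor, std; simpl; ring. Qed.

Ltac isos H := let h := fresh "iso" in
  pose proof (iso_vals _ H) as h;
  destruct h as (?&?&?&?&?&?&?&?&?&?&?&?&?&?&?).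

Definition tframe (E : R -> frame) (u m1 m2 : R -> R) : Prop :=
  forall t i, (i <= 4)%nat ->
   derivable_pt_lim (fun s => E s 0%nat i) t (u t * E t 1%nat i) /\
   derivable_pt_lim (fun s => E s 1%nat i) t (u t * (m1 t * E t 0%nat i + E t 4%nat i)) /\
   derivable_pt_lim (fun s => E s 2%nat i) t (u t * (E t 0%nat i + m2 t * E t 3%nat i)) /\
   derivable_pt_lim (fun s => E s 3%nat i) t (u t * (- m2 t * E t 2%nat i)) /\
   derivable_pt_lim (fun s => E s 4%nat i) t (u t * (m1 t * E t 1%nat i + E t 2%nat i)).

Lemma psd y X : lor y (chi X) = 0 ->
  lor y y = (y 1%nat - y 0%nat * X 1%nat)^2 + (y 2%nat - y 0%nat * X 2%nat)^2 + (y 3%nat - y 0%nat * X 3%nat)^2.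
Proof. cbv beta iota delta [lor chi dot3]. intros H.
  assert (y 4%nat = y 1%nat * X 1%nat + y 2%nat * X 2%nat + y 3%nat * X 3%nat
    - y 0%nat * (/ 2 * (X 1%nat * X 1%nat + X 2%nat * X 2%nat + X 3%nat * X 3%nat))) by lra.
  rewrite H0. field. Qed.

Section Uniq.
Variables (E F : R -> frame) (u m1 m2 v n1 n2 : R -> R) (X : R -> R3).
Hypotheses (HE : tframe E u m1 m2) (HF : tframe F v n1 n2)
  (IE : forall s, is_isometry (E s)) (IF : forall s, is_isometry (F s))
  (Pu : forall s, 0 < u s) (Pv : forall s, 0 < v s)
  (PE : forall s, 0 < E s 0%nat 0%nat) (PF : forall s, 0 < F s 0%nat 0%nat)
  (CE : forall s i, (i <= 4)%nat -> E s 0%nat i = E s 0%nat 0%nat * chi (X s) i)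
  (CF : forall s i, (i <= 4)%nat -> F s 0%nat i = F s 0%nat 0%nat * chi (X s) i).

Let rho s := F s 0%nat 0%nat / E s 0%nat 0%nat.
Let drho s := (v s * F s 1%nat 0%nat * E s 0%nat 0%nat - F s 0%nat 0%nat * (u s * E s 1%nat 0%nat))
   / (E s 0%nat 0%nat)^2.

Lemma U0 s i : (i <= 4)%nat -> F s 0%nat i = rho s * E s 0%nat i.
Proof. intros; unfold rho. rewrite (CF s i), (CE s i) by auto. field. apply Rgt_not_eq, PE. Qed.

Lemma Urho s : derivable_pt_lim rho s (drho s).
Proof. unfold rho, drho. apply dl_div; [apply HF| apply HE| apply Rgt_not_eq, PE]; lia. Qed.

Lemma U1a s i : (i <= 4)%nat -> v s * F s 1%nat i = drho s * E s 0%nat i + rho s * (u s * E s 1%nat i).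
Proof. intros Hi. eapply dl_unique. apply (HF s i Hi).
  apply (dl_ext (fun s => rho s * E s 0%nat i)). intros; rewrite U0; auto.
  apply dl_mult. apply Urho. apply HE; auto. Qed.

Lemma Uv s : v s = rho s * u s.
Proof.
  assert (v s * v s = (rho s * u s) * (rho s * u s)).
  { destruct (iso_vals _ (IE s)) as (e00&e11&e22&e33&e44&e04&e01&e02&e03&e12&e13&e14&e23&e24&e34).
    destruct (iso_vals _ (IF s)) as (f00&f11&f22&f33&f44&f04&f01&f02&f03&f12&f13&f14&f23&f24&f34).
    assert (lor (fun i => v s * F s 1%nat i) (fun i => v s * F s 1%nat i) = v s * v s).
    { replace (v s * v s) with (v s * v s * lor (F s 1%nat) (F s 1%nat)) by (rewrite f11; ring).
      unfold lor; ring. }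
    rewrite <- H.
    rewrite (lor_ext _ (fun i => drho s * E s 0%nat i + rho s * (u s * E s 1%nat i))
                     _ (fun i => drho s * E s 0%nat i + rho s * (u s * E s 1%nat i))) by (intros; apply U1a; auto).
    transitivity (drho s ^2 * lor (E s 0%nat) (E s 0%nat) + 2 * drho s * rho s * u s * lor (E s 0%nat) (E s 1%nat)
      + (rho s * u s)^2 * lor (E s 1%nat) (E s 1%nat)). unfold lor; ring.
    rewrite e00, e01, e11. ring. }
  assert (0 < rho s * u s). { unfold rho. apply Rmult_lt_0_compat; auto. apply Rdiv_lt_0_compat; auto. }
  specialize (Pv s). nra. Qed.

Let a s := drho s / v s.
Lemma U1 s i : (i <= 4)%nat -> F s 1%nat i = E s 1%nat i + a s * E s 0%nat i.
Proof. intros Hi. pose proof (U1a s i Hi) as H. rewrite Uv in H. unfold a.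
  rewrite Uv. assert (0 < rho s).
  { unfold rho; apply Rdiv_lt_0_compat; auto. }
  pose proof (Pu s). apply (Rmult_eq_reg_l (rho s * u s)). rewrite H. field. lra.
  apply Rgt_not_eq; nra. Qed.

Lemma lor_comb x y c w : lor (fun i => x i + c * y i) w = lor x w + c * lor y w.
Proof. unfold lor; ring. Qed.

Lemma U0l s w : lor (F s 0%nat) w = rho s * lor (E s 0%nat) w.
Proof. rewrite (lor_ext _ (fun i => rho s * E s 0%nat i) w w). unfold lor; ring.
  intros; apply U0; auto. auto. Qed.

Lemma U1l s w : lor (F s 1%nat) w = lor (E s 1%nat) w + a s * lor (E s 0%nat) w.
Proof. rewrite (lor_ext _ (fun i => E s 1%nat i + a s * E s 0%nat i) w w). apply lor_comb.
  intros; apply U1; auto. auto. Qed.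

Lemma U2 s : lor (F s 1%nat) (E s 0%nat) = 0 /\ lor (F s 1%nat) (E s 2%nat) = 0 /\ lor (F s 1%nat) (E s 3%nat) = 0.
Proof. destruct (iso_vals _ (IE s)) as (e00&e11&e22&e33&e44&e04&e01&e02&e03&e12&e13&e14&e23&e24&e34).
  rewrite !U1l. rewrite (lor_sym (E s 1%nat) (E s 0%nat)). rewrite e00, e01, e02, e03, e12, e13. lra. Qed.

Lemma U3 s : lor (F s 4%nat) (E s 3%nat) = 0.
Proof.
  assert (H := lor_deriv0 (fun s => F s 1%nat) (fun s => E s 3%nat)
     (fun i => v s * (n1 s * F s 0%nat i + F s 4%nat i)) (fun i => u s * (- m2 s * E s 2%nat i)) s
     (fun i Hi => proj1 (proj2 (HF s i Hi))) (fun i Hi => proj1 (proj2 (proj2 (proj2 (HE s i Hi)))))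
     (fun s => proj2 (proj2 (U2 s)))).
  cbv beta in H.
  replace (lor (fun i => v s * (n1 s * F s 0%nat i + F s 4%nat i)) (E s 3%nat)) with
    (v s * (n1 s * lor (F s 0%nat) (E s 3%nat) + lor (F s 4%nat) (E s 3%nat))) in H by (unfold lor; ring).
  replace (lor (F s 1%nat) (fun i => u s * (- m2 s * E s 2%nat i))) with
    (u s * (- m2 s) * lor (F s 1%nat) (E s 2%nat)) in H by (unfold lor; ring).
  rewrite U0l, (proj1 (proj2 (U2 s))) in H.
  destruct (iso_vals _ (IE s)) as (e00&e11&e22&e33&e44&e04&e01&e02&e03&e12&e13&e14&e23&e24&e34).
  rewrite e03 in H. pose proof (Pv s).
  assert (v s * lor (F s 4%nat) (E s 3%nat) = 0) by lra.
  apply Rmult_integral in H1; destruct H1; auto; lra. Qed.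

Lemma U4 s : lor (F s 4%nat) (E s 2%nat) = 0.
Proof.
  assert (H := lor_deriv0 (fun s => F s 1%nat) (fun s => E s 2%nat)
     (fun i => v s * (n1 s * F s 0%nat i + F s 4%nat i)) (fun i => u s * (E s 0%nat i + m2 s * E s 3%nat i)) s
     (fun i Hi => proj1 (proj2 (HF s i Hi))) (fun i Hi => proj1 (proj2 (proj2 (HE s i Hi))))
     (fun s => proj1 (proj2 (U2 s)))).
  cbv beta in H.
  replace (lor (fun i => v s * (n1 s * F s 0%nat i + F s 4%nat i)) (E s 2%nat)) with
    (v s * (n1 s * lor (F s 0%nat) (E s 2%nat) + lor (F s 4%nat) (E s 2%nat))) in H by (unfold lor; ring).
  replace (lor (F s 1%nat) (fun i => u s * (E s 0%nat i + m2 s * E s 3%nat i))) with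
    (u s * (lor (F s 1%nat) (E s 0%nat) + m2 s * lor (F s 1%nat) (E s 3%nat))) in H by (unfold lor; ring).
  rewrite U0l, (proj1 (U2 s)), (proj2 (proj2 (U2 s))) in H.
  destruct (iso_vals _ (IE s)) as (e00&e11&e22&e33&e44&e04&e01&e02&e03&e12&e13&e14&e23&e24&e34).
  rewrite e02 in H. pose proof (Pv s).
  assert (v s * lor (F s 4%nat) (E s 2%nat) = 0) by lra.
  apply Rmult_integral in H1; destruct H1; auto; lra. Qed.

Lemma rho_pos s : 0 < rho s.
Proof. unfold rho; apply Rdiv_lt_0_compat; auto. Qed.

Lemma U5 s : lor (F s 2%nat) (E s 2%nat) = / (rho s)^2.
Proof.
  assert (H := lor_deriv0 (fun s => F s 4%nat) (fun s => E s 2%nat)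
     (fun i => v s * (n1 s * F s 1%nat i + F s 2%nat i)) (fun i => u s * (E s 0%nat i + m2 s * E s 3%nat i)) s
     (fun i Hi => proj2 (proj2 (proj2 (proj2 (HF s i Hi))))) (fun i Hi => proj1 (proj2 (proj2 (HE s i Hi))))
     U4).
  cbv beta in H.
  replace (lor (fun i => v s * (n1 s * F s 1%nat i + F s 2%nat i)) (E s 2%nat)) with
    (v s * (n1 s * lor (F s 1%nat) (E s 2%nat) + lor (F s 2%nat) (E s 2%nat))) in H by (unfold lor; ring).
  replace (lor (F s 4%nat) (fun i => u s * (E s 0%nat i + m2 s * E s 3%nat i))) with
    (u s * (lor (F s 4%nat) (E s 0%nat) + m2 s * lor (F s 4%nat) (E s 3%nat))) in H by (unfold lor; ring).
  rewrite (proj1 (proj2 (U2 s))), U3 in H.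
  destruct (iso_vals _ (IF s)) as (f00&f11&f22&f33&f44&f04&f01&f02&f03&f12&f13&f14&f23&f24&f34).
  assert (lor (F s 4%nat) (E s 0%nat) = - / rho s).
  { rewrite lor_sym in f04. rewrite (lor_sym (F s 4%nat)) in f04. rewrite U0l in f04.
    rewrite lor_sym. pose proof (rho_pos s). apply (Rmult_eq_reg_l (rho s)). rewrite f04. field. lra. lra. }
  rewrite H0, Uv in H. pose proof (rho_pos s). pose proof (Pu s).
  set (L := lor (F s 2%nat) (E s 2%nat)) in *.
  assert (u s * (rho s * L - / rho s) = 0) by (rewrite <- H; ring).
  apply Rmult_integral in H3; destruct H3 as [H3|H3]; [lra|].
  replace L with ((rho s * L) / rho s) by (field; lra).
  replace (rho s * L) with (/ rho s) by lra. field; lra. Qed.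

Lemma U6 s : (lor (F s 2%nat) (E s 2%nat))^2 <= 1.
Proof. set (c := lor (F s 2%nat) (E s 2%nat)).
  destruct (iso_vals _ (IE s)) as (e00&e11&e22&e33&e44&e04&e01&e02&e03&e12&e13&e14&e23&e24&e34).
  destruct (iso_vals _ (IF s)) as (f00&f11&f22&f33&f44&f04&f01&f02&f03&f12&f13&f14&f23&f24&f34).
  assert (HE2 : lor (E s 2%nat) (chi (X s)) = 0).
  { assert (E s 0%nat 0%nat * lor (chi (X s)) (E s 2%nat) = 0).
    { rewrite <- e02. symmetry. transitivity (lor (fun i => E s 0%nat 0%nat * chi (X s) i) (E s 2%nat)).
      apply lor_ext; auto; intros; apply CE; auto. unfold lor; ring. }
    pose proof (PE s). rewrite lor_sym. apply Rmult_integral in H; destruct H; auto; lra. }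
  assert (HF2 : lor (F s 2%nat) (chi (X s)) = 0).
  { assert (F s 0%nat 0%nat * lor (chi (X s)) (F s 2%nat) = 0).
    { rewrite <- f02. symmetry. transitivity (lor (fun i => F s 0%nat 0%nat * chi (X s) i) (F s 2%nat)).
      apply lor_ext; auto; intros; apply CF; auto. unfold lor; ring. }
    pose proof (PF s). rewrite lor_sym. apply Rmult_integral in H; destruct H; auto; lra. }
  set (y := fun i => F s 2%nat i + (- c) * E s 2%nat i).
  assert (lor y (chi (X s)) = 0). { unfold y; rewrite lor_comb, HE2, HF2; ring. }
  apply psd in H.
  assert (lor y y = 1 - c^2).
  { unfold y. rewrite lor_comb. rewrite !(lor_sym _ (fun i => _ + _)), !lor_comb.
    fold c. rewrite (lor_sym (E s 2%nat) (F s 2%nat)). fold c. rewrite f22, e22. ring. }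
  rewrite H0 in H.
  match type of H with _ = ?a ^2 + ?b ^2 + ?c ^2 => pose proof (pow2_ge_0 a); pose proof (pow2_ge_0 b); pose proof (pow2_ge_0 c) end.
  lra. Qed.

Lemma Ufinal s : E s 0%nat 0%nat <= F s 0%nat 0%nat.
Proof. pose proof (U6 s). rewrite U5 in H. pose proof (rho_pos s).
  assert (1 <= rho s).
  { destruct (Rle_lt_dec 1 (rho s)); auto.
    assert (rho s ^2 < 1) by nra.
    assert (1 < / rho s ^2). { rewrite <- Rinv_1. apply Rinv_lt_contravar; nra. }
    nra. }
  unfold rho in H1. pose proof (PE s).
  apply (Rmult_le_compat_r (E s 0%nat 0%nat)) in H1; [|lra].
  replace (F s 0%nat 0%nat / E s 0%nat 0%nat * E s 0%nat 0%nat) with (F s 0%nat 0%nat) in H1 by (field; lra).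
  lra. Qed.

Lemma Ueq s : E s 0%nat 0%nat = F s 0%nat 0%nat ->
  forall k, (1 <= k <= 3)%nat -> F s 2%nat k - F s 2%nat 0%nat * X s k = E s 2%nat k - E s 2%nat 0%nat * X s k.
Proof. intros Heq.
  assert (Hc : lor (F s 2%nat) (E s 2%nat) = 1).
  { rewrite U5. unfold rho; rewrite Heq. field. pose proof (PF s); lra. }
  set (c := lor (F s 2%nat) (E s 2%nat)) in *.
  destruct (iso_vals _ (IE s)) as (e00&e11&e22&e33&e44&e04&e01&e02&e03&e12&e13&e14&e23&e24&e34).
  destruct (iso_vals _ (IF s)) as (f00&f11&f22&f33&f44&f04&f01&f02&f03&f12&f13&f14&f23&f24&f34).
  assert (HE2 : lor (E s 2%nat) (chi (X s)) = 0).
  { assert (E s 0%nat 0%nat * lor (chi (X s)) (E s 2%nat) = 0).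
    { rewrite <- e02. symmetry. transitivity (lor (fun i => E s 0%nat 0%nat * chi (X s) i) (E s 2%nat)).
      apply lor_ext; auto; intros; apply CE; auto. unfold lor; ring. }
    pose proof (PE s). rewrite lor_sym. apply Rmult_integral in H; destruct H; auto; lra. }
  assert (HF2 : lor (F s 2%nat) (chi (X s)) = 0).
  { assert (F s 0%nat 0%nat * lor (chi (X s)) (F s 2%nat) = 0).
    { rewrite <- f02. symmetry. transitivity (lor (fun i => F s 0%nat 0%nat * chi (X s) i) (F s 2%nat)).
      apply lor_ext; auto; intros; apply CF; auto. unfold lor; ring. }
    pose proof (PF s). rewrite lor_sym. apply Rmult_integral in H; destruct H; auto; lra. }
  set (y := fun i => F s 2%nat i + (- c) * E s 2%nat i).
  assert (lor y (chi (X s)) = 0). { unfold y; rewrite lor_comb, HE2, HF2; ring. }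
  apply psd in H.
  assert (lor y y = 1 - c^2).
  { unfold y. rewrite lor_comb. rewrite !(lor_sym _ (fun i => _ + _)), !lor_comb.
    fold c. rewrite (lor_sym (E s 2%nat) (F s 2%nat)). fold c. rewrite f22, e22. ring. }
  rewrite H0, Hc in H.
  match type of H with _ = ?a ^2 + ?b ^2 + ?c ^2 => pose proof (pow2_ge_0 a); pose proof (pow2_ge_0 b); pose proof (pow2_ge_0 c) end.
  unfold y in *. rewrite Hc in *.
  intros k Hk. destruct k as [|[|[|[|k]]]]; try lia; nra.
Qed.
End Uniq.

Definition Cd (X X1 : R3) (i : nat) : R :=
  match i with 0%nat => 0 | 1%nat | 2%nat | 3%nat => X1 i | 4%nat => dot3 X X1 | _ => 0 end.
Definition Vv (E : frame) (A : nat) (X : R3) : R3 := fun k => E A k - E A 0%nat * X k.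

Lemma orient_alg (E : frame) (X X1 : R3) lam dlam u :
 (forall i, (i<=4)%nat -> E 0%nat i = lam * chi X i) ->
 (forall i, (i<=4)%nat -> u * E 1%nat i = dlam * chi X i + lam * Cd X X1 i) ->
 lor (E 2%nat) (chi X) = 0 -> lor (E 3%nat) (chi X) = 0 -> lam * lor (E 4%nat) (chi X) = -1 ->
 u <> 0 -> lam <> 0 ->
 u * detn 5 (matof E) = lam * det3 X1 (Vv E 2%nat X) (Vv E 3%nat X).
Proof. intros H0 H1 H2 H3 H4 Hu Hl.
  assert (G1 : forall i, (i <= 4)%nat -> E 1%nat i = (dlam * chi X i + lam * Cd X X1 i) / u).
  { intros. rewrite <- H1 by auto. field; auto. }
  cbv beta iota delta [lor chi dot3] in H2, H3, H4.
  assert (G2 : E 2%nat 4%nat = E 2%nat 1%nat * X 1%nat + E 2%nat 2%nat * X 2%nat + E 2%nat 3%nat * X 3%nat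
     - E 2%nat 0%nat * (/ 2 * (X 1%nat * X 1%nat + X 2%nat * X 2%nat + X 3%nat * X 3%nat))) by lra.
  assert (G3 : E 3%nat 4%nat = E 3%nat 1%nat * X 1%nat + E 3%nat 2%nat * X 2%nat + E 3%nat 3%nat * X 3%nat
     - E 3%nat 0%nat * (/ 2 * (X 1%nat * X 1%nat + X 2%nat * X 2%nat + X 3%nat * X 3%nat))) by lra.
  assert (G4 : E 4%nat 4%nat = E 4%nat 1%nat * X 1%nat + E 4%nat 2%nat * X 2%nat + E 4%nat 3%nat * X 3%nat
     - E 4%nat 0%nat * (/ 2 * (X 1%nat * X 1%nat + X 2%nat * X 2%nat + X 3%nat * X 3%nat)) + / lam).
  { apply (Rmult_eq_reg_l lam); auto. rewrite Rmult_plus_distr_l, Rinv_r by auto. lra. }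
  cbv beta iota zeta delta [detn lapl skip sgn Nat.ltb Nat.leb matof].
  rewrite !H0, !G1 by lia. rewrite G2, G3, G4.
  unfold det3, dot3, cross3, Vv. cbv beta iota delta [chi Cd dot3].
  field. auto. Qed.

Ltac u3 := unfold det3, dot3, cross3; cbv beta iota.

Lemma lagr a b c d : dot3 (cross3 a b) (cross3 c d) = dot3 a c * dot3 b d - dot3 a d * dot3 b c.
Proof. u3; ring. Qed.
Lemma gram3 a b c : (det3 a b c)^2 = dot3 a a * dot3 b b * dot3 c c + 2 * dot3 a b * dot3 b c * dot3 c a
  - dot3 a a * (dot3 b c)^2 - dot3 b b * (dot3 a c)^2 - dot3 c c * (dot3 a b)^2.
Proof. u3; ring. Qed.
Lemma parseval V Z X1 X2 :
  dot3 (cross3 X1 X2) (cross3 X1 X2) * dot3 X1 X1 * dot3 V Z = dot3 (cross3 X1 X2) (cross3 X1 X2) * dot3 V X1 * dot3 Z X1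
     + dot3 V (cross3 (cross3 X1 X2) X1) * dot3 Z (cross3 (cross3 X1 X2) X1)
     + dot3 X1 X1 * dot3 V (cross3 X1 X2) * dot3 Z (cross3 X1 X2).
Proof. u3; ring. Qed.
Lemma det3_cyc a b c : det3 a b c = det3 b c a.
Proof. u3; ring. Qed.
Lemma dot3_sym a b : dot3 a b = dot3 b a.
Proof. u3; ring. Qed.
Lemma cross_perp1 a b : dot3 a (cross3 a b) = 0.
Proof. u3; ring. Qed.
Lemma cross_perp2 a b : dot3 b (cross3 a b) = 0.
Proof. u3; ring. Qed.
Lemma dot3_nonneg a : 0 <= dot3 a a.
Proof. unfold dot3. nra. Qed.

Lemma cross_char a b c : 0 < dot3 a a -> dot3 b b = 1 -> dot3 a b = 0 -> dot3 c c = 1 -> dot3 a c = 0 ->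
  dot3 b c = 0 -> 0 < det3 a b c ->
  forall k, (1 <= k <= 3)%nat -> c k * sqrt (dot3 a a) = cross3 a b k.
Proof. intros Ha Hb Hab Hc Hac Hbc Hd.
  pose proof (gram3 a b c) as G. rewrite Hb, Hc, Hab, Hac, Hbc in G.
  rewrite (dot3_sym c a), Hac in G.
  set (w := sqrt (dot3 a a)).
  assert (Hw : w * w = dot3 a a) by (apply sqrt_sqrt; lra).
  assert (Hw0 : 0 < w) by (apply sqrt_lt_R0; lra).
  assert (HD : det3 a b c = w).
  { assert ((det3 a b c - w) * (det3 a b c + w) = 0) by nra.
    apply Rmult_integral in H; destruct H; nra. }
  assert (Hab2 : dot3 (cross3 a b) (cross3 a b) = dot3 a a).
  { rewrite lagr, Hb, Hab. ring. }
  assert (S : (c 1%nat * w - cross3 a b 1%nat)^2 + (c 2%nat * w - cross3 a b 2%nat)^2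
     + (c 3%nat * w - cross3 a b 3%nat)^2 = 0).
  { transitivity (dot3 c c * (w * w) - 2 * w * det3 a b c + dot3 (cross3 a b) (cross3 a b)).
    - clearbody w. u3. ring.
    - rewrite Hc, HD, Hab2, <- Hw. ring. }
  pose proof (pow2_ge_0 (c 1%nat * w - cross3 a b 1%nat)).
  pose proof (pow2_ge_0 (c 2%nat * w - cross3 a b 2%nat)).
  pose proof (pow2_ge_0 (c 3%nat * w - cross3 a b 3%nat)).
  intros k Hk; destruct k as [|[|[|[|k]]]]; try lia; nra. Qed.

Lemma dl_dot3 (a b : R -> R3) (da db : R3) t :
  (forall k, (1 <= k <= 3)%nat -> derivable_pt_lim (fun s => a s k) t (da k)) ->
  (forall k, (1 <= k <= 3)%nat -> derivable_pt_lim (fun s => b s k) t (db k)) ->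
  derivable_pt_lim (fun s => dot3 (a s) (b s)) t (dot3 da (b t) + dot3 (a t) db).
Proof. intros Ha Hb. unfold dot3. eapply dl_eq.
  { repeat first [apply dl_plus | apply dl_mult | (apply Ha; lia) | (apply Hb; lia)]. }
  cbv beta; ring. Qed.

Lemma cp_plus f g x : continuity_pt f x -> continuity_pt g x -> continuity_pt (fun s => f s + g s) x.
Proof. intros; exact (continuity_pt_plus f g x H H0). Qed.
Lemma cp_minus f g x : continuity_pt f x -> continuity_pt g x -> continuity_pt (fun s => f s - g s) x.
Proof. intros; exact (continuity_pt_minus f g x H H0). Qed.
Lemma cp_mult f g x : continuity_pt f x -> continuity_pt g x -> continuity_pt (fun s => f s * g s) x.
Proof. intros; exact (continuity_pt_mult f g x H H0). Qed.
Lemma cp_opp f x : continuity_pt f x -> continuity_pt (fun s => - f s) x.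
Proof. intros; exact (continuity_pt_opp f x H). Qed.
Lemma cp_div f g x : continuity_pt f x -> continuity_pt g x -> g x <> 0 -> continuity_pt (fun s => f s / g s) x.
Proof. intros; exact (continuity_pt_div f g x H H0 H1). Qed.
Lemma cp_sqrt f x : continuity_pt f x -> 0 <= f x -> continuity_pt (fun s => sqrt (f s)) x.
Proof. intros; exact (continuity_pt_comp f sqrt x H (continuity_pt_sqrt _ H0)). Qed.
Lemma cp_dl f x a : derivable_pt_lim f x a -> continuity_pt f x.
Proof. intros. apply derivable_continuous_pt. exists a; auto. Qed.

Lemma dl_cos f x a : derivable_pt_lim f x a -> derivable_pt_lim (fun s => cos (f s)) x (- sin (f x) * a).
Proof. intros. eapply dl_eq. exact (derivable_pt_lim_comp f cos x a _ H (derivable_pt_lim_cos (f x))). ring. Qed.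
Lemma dl_sin f x a : derivable_pt_lim f x a -> derivable_pt_lim (fun s => sin (f s)) x (cos (f x) * a).
Proof. intros. eapply dl_eq. exact (derivable_pt_lim_comp f sin x a _ H (derivable_pt_lim_sin (f x))). ring. Qed.

Definition vv (y : R5) (X : R3) : R3 := fun k => y k - y 0%nat * X k.

Lemma psd2 y z X : lor y (chi X) = 0 -> lor z (chi X) = 0 -> lor y z = dot3 (vv y X) (vv z X).
Proof. cbv beta iota delta [lor chi dot3 vv]. intros H H'.
  assert (y 4%nat = y 1%nat * X 1%nat + y 2%nat * X 2%nat + y 3%nat * X 3%nat
    - y 0%nat * (/ 2 * (X 1%nat * X 1%nat + X 2%nat * X 2%nat + X 3%nat * X 3%nat))) by lra.
  assert (z 4%nat = z 1%nat * X 1%nat + z 2%nat * X 2%nat + z 3%nat * X 3%nat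
    - z 0%nat * (/ 2 * (X 1%nat * X 1%nat + X 2%nat * X 2%nat + X 3%nat * X 3%nat))) by lra.
  rewrite H0, H1. field. Qed.

Lemma lor_Cd y X X1 : lor y (Cd X X1) = dot3 (vv y X) X1.
Proof. cbv beta iota delta [lor Cd dot3 vv]. ring. Qed.

Section Main.
Variables (Fd : nat -> R -> R3) (L : R) (sigma dsigma mu1 mu2 : R -> R) (e : R -> frame).
Hypotheses (Htow : smooth_curve_tower Fd) (HL : 0 < L)
 (Hper : forall (t : R) (i : nat), (1 <= i <= 3)%nat -> Fd 0%nat (t + L) i = Fd 0%nat t i)
 (Hreg : forall t, norm3 (Fd 1%nat t) <> 0)
 (Hcurv : forall t, curvature Fd t <> 0)
 (Hsig : forall t, derivable_pt_lim sigma t (dsigma t))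
 (Hdsig : forall t, 0 < dsigma t)
 (Hmu2 : is_smooth mu2)
 (Hmob : forall s, Mob3 (e s))
 (Hfr : conformal_frenet e mu1 mu2)
 (Hbase : forall t, exists lam : R, lam <> 0 /\
      forall i : nat, (i <= 4)%nat -> e (sigma t) 0%nat i = lam * chi (Fd 0%nat t) i).

Lemma perF n : forall t i, (1 <= i <= 3)%nat -> Fd n (t + L) i = Fd n t i.
Proof. induction n; intros t i Hi. apply Hper; auto.
  eapply dl_unique. apply dl_shift. apply Htow; auto.
  apply (dl_ext (fun s => Fd n s i)). intros; rewrite IHn; auto. apply Htow; auto. Qed.

Lemma chi_per t i : chi (Fd 0%nat (t + L)) i = chi (Fd 0%nat t) i.
Proof. destruct i as [|[|[|[|[|i]]]]]; cbv beta iota delta [chi dot3]; auto;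
  rewrite ?Hper by lia; auto. Qed.

Let E t := e (sigma t).
Let m1 t := mu1 (sigma t).
Let m2 t := mu2 (sigma t).

Lemma tfE : tframe E dsigma m1 m2.
Proof. intros t i Hi. destruct (Hfr (sigma t) i Hi) as (D0&D1&D2&D3&D4).
  unfold E, m1, m2.
  repeat split; (eapply dl_eq; [apply (derivable_pt_lim_comp sigma (fun s => e s _ i)); [apply Hsig| eassumption] | ring]).
Qed.

Lemma tfF : tframe (fun t => E (t + L)) (fun t => dsigma (t + L)) (fun t => m1 (t + L)) (fun t => m2 (t + L)).
Proof. intros t i Hi. destruct (tfE (t + L) i Hi) as (D0&D1&D2&D3&D4).
  repeat split; apply (dl_shift (fun s => E s _ i)); auto. Qed.

Lemma IE t : is_isometry (E t).
Proof. apply mob_iso, Hmob. Qed.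

Lemma CE t i : (i <= 4)%nat -> E t 0%nat i = E t 0%nat 0%nat * chi (Fd 0%nat t) i.
Proof. destruct (Hbase t) as [lam [Hl H]]. intros Hi. unfold E. rewrite !H by lia.
  cbv beta iota delta [chi]. ring. Qed.

Lemma PE t : 0 < E t 0%nat 0%nat.
Proof. pose proof (mob_time _ (Hmob (sigma t))). fold (E t) in H.
  rewrite (CE t 4%nat) in H by lia. cbv beta iota delta [chi] in H.
  pose proof (dot3_nonneg (Fd 0%nat t)).
  assert (E t 0%nat 0%nat * (1 + / 2 * dot3 (Fd 0%nat t) (Fd 0%nat t)) > 0) by lra.
  assert (0 < 1 + / 2 * dot3 (Fd 0%nat t) (Fd 0%nat t)) by lra.
  nra. Qed.

Lemma dchi t i : derivable_pt_lim (fun s => chi (Fd 0%nat s) i) t (Cd (Fd 0%nat t) (Fd 1%nat t) i).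
Proof. destruct i as [|[|[|[|[|i]]]]]; cbv beta iota delta [chi Cd dot3].
  - apply dl_const.
  - apply Htow; lia.
  - apply Htow; lia.
  - apply Htow; lia.
  - eapply dl_eq. { apply (dl_mult (fun _ => / 2)). apply dl_const.
      dl_auto; apply Htow; lia. } cbv beta. field.
  - apply dl_const. Qed.

Lemma uE1 t i : (i <= 4)%nat -> dsigma t * E t 1%nat i =
  (dsigma t * E t 1%nat 0%nat) * chi (Fd 0%nat t) i + E t 0%nat 0%nat * Cd (Fd 0%nat t) (Fd 1%nat t) i.
Proof. intros Hi. eapply dl_unique. apply (tfE t i Hi).
  apply (dl_ext (fun s => E s 0%nat 0%nat * chi (Fd 0%nat s) i)). intros; rewrite (CE s i); auto.
  apply dl_mult. apply tfE; lia. apply dchi. Qed.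

Lemma lorE0 t w : lor (E t 0%nat) w = E t 0%nat 0%nat * lor (chi (Fd 0%nat t)) w.
Proof. rewrite (lor_ext _ (fun i => E t 0%nat 0%nat * chi (Fd 0%nat t) i) w w).
  unfold lor; ring. intros; apply CE; auto. auto. Qed.

Lemma lorC t : lor (E t 2%nat) (chi (Fd 0%nat t)) = 0 /\ lor (E t 3%nat) (chi (Fd 0%nat t)) = 0 /\
  E t 0%nat 0%nat * lor (E t 4%nat) (chi (Fd 0%nat t)) = -1.
Proof. destruct (iso_vals _ (IE t)) as (e00&e11&e22&e33&e44&e04&e01&e02&e03&e12&e13&e14&e23&e24&e34).
  rewrite lorE0 in e02, e03, e04. pose proof (PE t).
  rewrite !(lor_sym _ (chi _)). repeat split.
  - apply Rmult_integral in e02; destruct e02; auto; lra.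
  - apply Rmult_integral in e03; destruct e03; auto; lra.
  - auto. Qed.

Let V2 t := vv (E t 2%nat) (Fd 0%nat t).
Let V3 t := vv (E t 3%nat) (Fd 0%nat t).

Lemma orient t : 0 < det3 (Fd 1%nat t) (V2 t) (V3 t).
Proof. destruct (lorC t) as (H2&H3&H4).
  pose proof (orient_alg (E t) (Fd 0%nat t) (Fd 1%nat t) (E t 0%nat 0%nat) (dsigma t * E t 1%nat 0%nat) (dsigma t)
    (CE t) (uE1 t) H2 H3 H4 (Rgt_not_eq _ _ (Hdsig t)) (Rgt_not_eq _ _ (PE t))).
  pose proof (mob_det _ (Hmob (sigma t))). fold (E t) in H0.
  pose proof (Hdsig t). pose proof (PE t).
  unfold V2, V3, vv. unfold Vv in H.
  assert (Hq : 0 < dsigma t * detn 5 (matof (E t))) by (apply Rmult_lt_0_compat; auto).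
  rewrite H in Hq. nra. Qed.

Lemma Vfacts t : dot3 (V2 t) (Fd 1%nat t) = 0 /\ dot3 (V3 t) (Fd 1%nat t) = 0 /\
  dot3 (V2 t) (V2 t) = 1 /\ dot3 (V3 t) (V3 t) = 1 /\ dot3 (V2 t) (V3 t) = 0.
Proof. destruct (lorC t) as (H2&H3&H4).
  destruct (iso_vals _ (IE t)) as (e00&e11&e22&e33&e44&e04&e01&e02&e03&e12&e13&e14&e23&e24&e34).
  pose proof (PE t). pose proof (Hdsig t).
  assert (K : forall A, lor (E t A) (chi (Fd 0%nat t)) = 0 -> lor (E t A) (E t 1%nat) = 0 ->
     dot3 (vv (E t A) (Fd 0%nat t)) (Fd 1%nat t) = 0).
  { intros A HA HB. rewrite <- lor_Cd.
    assert (dsigma t * lor (E t A) (E t 1%nat) = E t 0%nat 0%nat * lor (E t A) (Cd (Fd 0%nat t) (Fd 1%nat t))).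
    { transitivity (lor (E t A) (fun i => dsigma t * E t 1%nat i)). unfold lor; ring.
      transitivity (lor (E t A) (fun i => (dsigma t * E t 1%nat 0%nat) * chi (Fd 0%nat t) i
           + E t 0%nat 0%nat * Cd (Fd 0%nat t) (Fd 1%nat t) i)).
      apply lor_ext; auto; intros; apply uE1; auto.
      transitivity ((dsigma t * E t 1%nat 0%nat) * lor (E t A) (chi (Fd 0%nat t))
         + E t 0%nat 0%nat * lor (E t A) (Cd (Fd 0%nat t) (Fd 1%nat t))). unfold lor; ring.
      rewrite HA; ring. }
    rewrite HB, Rmult_0_r in H1. apply eq_sym, Rmult_integral in H1. destruct H1; [lra|auto]. }
  unfold V2, V3. repeat split.
  - apply K; auto. rewrite lor_sym; auto.
  - apply K; auto. rewrite lor_sym; auto.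
  - rewrite <- psd2; auto.
  - rewrite <- psd2; auto.
  - rewrite <- psd2; auto. Qed.

Lemma CF s i : (i <= 4)%nat -> E (s + L) 0%nat i = E (s + L) 0%nat 0%nat * chi (Fd 0%nat s) i.
Proof. intros Hi. rewrite CE by auto. rewrite chi_per. auto. Qed.

Lemma lam_per t : E t 0%nat 0%nat = E (t + L) 0%nat 0%nat.
Proof. apply Rle_antisym.
  - apply (Ufinal E (fun s => E (s + L)) dsigma m1 m2 (fun t => dsigma (t + L)) (fun t => m1 (t + L))
      (fun t => m2 (t + L)) (fun s => Fd 0%nat s) tfE tfF IE (fun s => IE (s + L)) Hdsig
      (fun s => Hdsig (s + L)) PE (fun s => PE (s + L)) CE CF t).
  - apply (Ufinal (fun s => E (s + L)) E (fun t => dsigma (t + L)) (fun t => m1 (t + L))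
      (fun t => m2 (t + L)) dsigma m1 m2 (fun s => Fd 0%nat s) tfF tfE (fun s => IE (s + L)) IE
      (fun s => Hdsig (s + L)) Hdsig (fun s => PE (s + L)) PE CF CE t). Qed.

Lemma V2_per t k : (1 <= k <= 3)%nat -> V2 (t + L) k = V2 t k.
Proof. intros Hk.
  pose proof (Ueq E (fun s => E (s + L)) dsigma m1 m2 (fun t => dsigma (t + L)) (fun t => m1 (t + L))
      (fun t => m2 (t + L)) (fun s => Fd 0%nat s) tfE tfF IE (fun s => IE (s + L)) Hdsig
      (fun s => Hdsig (s + L)) PE (fun s => PE (s + L)) CE CF t (lam_per t) k Hk).
  unfold V2, vv. rewrite Hper by auto. exact H. Qed.

Lemma dot_pos t : 0 < dot3 (Fd 1%nat t) (Fd 1%nat t).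
Proof. pose proof (dot3_nonneg (Fd 1%nat t)). destruct H; auto.
  exfalso; apply (Hreg t). unfold norm3. rewrite <- H. apply sqrt_0. Qed.

Lemma V3_char t k : (1 <= k <= 3)%nat -> V3 t k * sqrt (dot3 (Fd 1%nat t) (Fd 1%nat t)) = cross3 (Fd 1%nat t) (V2 t) k.
Proof. destruct (Vfacts t) as (a1&a2&a3&a4&a5). apply cross_char; auto.
  apply dot_pos. rewrite dot3_sym; auto. rewrite dot3_sym; auto. apply orient. Qed.

Lemma V3_per t k : (1 <= k <= 3)%nat -> V3 (t + L) k = V3 t k.
Proof. intros Hk. pose proof (V3_char (t + L) k Hk). pose proof (V3_char t k Hk).
  assert (dot3 (Fd 1%nat (t + L)) (Fd 1%nat (t + L)) = dot3 (Fd 1%nat t) (Fd 1%nat t)).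
  { unfold dot3; rewrite !perF by lia; auto. }
  assert (cross3 (Fd 1%nat (t + L)) (V2 (t + L)) k = cross3 (Fd 1%nat t) (V2 t) k).
  { destruct k as [|[|[|[|k]]]]; try lia; cbv beta iota delta [cross3]; rewrite !perF, !V2_per by lia; auto. }
  rewrite H1, H2, <- H0 in H.
  pose proof (sqrt_lt_R0 _ (dot_pos t)).
  apply Rmult_eq_reg_r in H; auto. lra. Qed.

Let B0 t := cross3 (Fd 1%nat t) (Fd 2%nat t).
Let N0 t := cross3 (B0 t) (Fd 1%nat t).
Let Zc t := cross3 (Fd 1%nat t) (Fd 3%nat t).
Let ww t := sqrt (dot3 (Fd 1%nat t) (Fd 1%nat t)).
Let p t := dot3 (V2 t) (B0 t).
Let q t := dot3 (V3 t) (B0 t).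

Lemma sum3 (f : nat -> R) : (forall k, (1 <= k <= 3)%nat -> f k = 0) -> f 1%nat + f 2%nat + f 3%nat = 0.
Proof. intros H; rewrite !H by lia; ring. Qed.

Lemma wq t : ww t * q t = det3 (Fd 1%nat t) (V2 t) (B0 t).
Proof. unfold q. transitivity (dot3 (fun k => V3 t k * ww t) (B0 t)). unfold dot3; ring.
  transitivity (dot3 (cross3 (Fd 1%nat t) (V2 t)) (B0 t)).
  unfold dot3; rewrite !V3_char by lia; auto. reflexivity. Qed.

Lemma wV3N0 t : ww t * dot3 (V3 t) (N0 t) = - dot3 (Fd 1%nat t) (Fd 1%nat t) * p t.
Proof. transitivity (dot3 (fun k => V3 t k * ww t) (N0 t)). unfold dot3; ring.
  transitivity (dot3 (cross3 (Fd 1%nat t) (V2 t)) (N0 t)).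
  unfold dot3; rewrite !V3_char by lia; auto.
  unfold N0. rewrite lagr. unfold B0. rewrite cross_perp1. unfold p, B0. rewrite (dot3_sym (V2 t) (Fd 1%nat t)). ring. Qed.

Lemma V2N0 t : dot3 (V2 t) (N0 t) = ww t * q t.
Proof. rewrite wq. unfold N0, det3. u3. ring. Qed.

Lemma ZN0 t : dot3 (Zc t) (N0 t) = - dot3 (Fd 1%nat t) (Fd 1%nat t) * det3 (Fd 1%nat t) (Fd 2%nat t) (Fd 3%nat t).
Proof. unfold Zc, N0, B0. u3. ring. Qed.

Lemma bpos t : 0 < dot3 (B0 t) (B0 t).
Proof. pose proof (dot3_nonneg (B0 t)). destruct H; auto. exfalso; apply (Hcurv t).
  unfold curvature, norm3. fold (B0 t). rewrite <- H, sqrt_0. unfold Rdiv; ring. Qed.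

Lemma wpos t : 0 < ww t.
Proof. apply sqrt_lt_R0, dot_pos. Qed.

Lemma V2Z t : dot3 (V2 t) (Zc t) = - ww t * torsion Fd t * q t + p t * dot3 (Zc t) (B0 t) / dot3 (B0 t) (B0 t).
Proof. pose proof (parseval (V2 t) (Zc t) (Fd 1%nat t) (Fd 2%nat t)) as P.
  fold (B0 t) in P. fold (N0 t) in P. rewrite V2N0, ZN0 in P.
  destruct (Vfacts t) as (a1&a2&a3&a4&a5). fold (V2 t) in a1. rewrite a1 in P.
  fold (p t) in P. rewrite (dot3_sym (Zc t) (B0 t)) in P |- *.
  pose proof (bpos t). pose proof (wpos t).
  assert (Hw : ww t * ww t = dot3 (Fd 1%nat t) (Fd 1%nat t)) by (apply sqrt_sqrt, dot3_nonneg).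
  unfold torsion. fold (B0 t). unfold norm3. rewrite pow2_sqrt by (apply dot3_nonneg).
  apply (Rmult_eq_reg_l (dot3 (B0 t) (B0 t) * dot3 (Fd 1%nat t) (Fd 1%nat t))). rewrite P.
  rewrite <- Hw. field. lra. apply Rgt_not_eq, Rmult_lt_0_compat; auto. apply dot_pos. Qed.

Lemma V3Z t : dot3 (V3 t) (Zc t) = ww t * torsion Fd t * p t + q t * dot3 (Zc t) (B0 t) / dot3 (B0 t) (B0 t).
Proof. pose proof (parseval (V3 t) (Zc t) (Fd 1%nat t) (Fd 2%nat t)) as P.
  fold (B0 t) in P. fold (N0 t) in P. rewrite ZN0 in P.
  destruct (Vfacts t) as (a1&a2&a3&a4&a5). fold (V3 t) in a2. rewrite a2 in P.
  fold (q t) in P. rewrite (dot3_sym (Zc t) (B0 t)) in P |- *.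
  pose proof (bpos t). pose proof (wpos t). pose proof (wV3N0 t).
  assert (Hw : ww t * ww t = dot3 (Fd 1%nat t) (Fd 1%nat t)) by (apply sqrt_sqrt, dot3_nonneg).
  assert (dot3 (V3 t) (N0 t) = - ww t * p t).
  { apply (Rmult_eq_reg_l (ww t)); [|lra]. rewrite H1, <- Hw. ring. }
  rewrite H2 in P.
  unfold torsion. fold (B0 t). unfold norm3. rewrite pow2_sqrt by (apply dot3_nonneg).
  apply (Rmult_eq_reg_l (dot3 (B0 t) (B0 t) * dot3 (Fd 1%nat t) (Fd 1%nat t))). rewrite P.
  rewrite <- Hw. field. lra. apply Rgt_not_eq, Rmult_lt_0_compat; auto. apply dot_pos. Qed.

Lemma D_V2 t k : (1 <= k <= 3)%nat ->
  derivable_pt_lim (fun s => V2 s k) t (dsigma t * m2 t * V3 t k - E t 2%nat 0%nat * Fd 1%nat t k).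
Proof. intros Hk. unfold V2, V3, vv. eapply dl_eq.
  { apply dl_minus. apply tfE; lia. apply dl_mult. apply tfE; lia. apply Htow; auto. }
  rewrite (CE t k) by lia. assert (chi (Fd 0%nat t) k = Fd 0%nat t k).
  { destruct k as [|[|[|[|k]]]]; try lia; reflexivity. }
  rewrite H, (CE t 0%nat) by lia. cbv beta iota delta [chi]. ring. Qed.

Lemma D_V3 t k : (1 <= k <= 3)%nat ->
  derivable_pt_lim (fun s => V3 s k) t (- dsigma t * m2 t * V2 t k - E t 3%nat 0%nat * Fd 1%nat t k).
Proof. intros Hk. unfold V2, V3, vv. eapply dl_eq.
  { apply dl_minus. apply tfE; lia. apply dl_mult. apply tfE; lia. apply Htow; auto. }
  cbv beta; ring. Qed.

Lemma D_B0 t k : (1 <= k <= 3)%nat -> derivable_pt_lim (fun s => B0 s k) t (Zc t k).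
Proof. intros Hk. unfold B0, Zc. destruct k as [|[|[|[|k]]]]; try lia; cbv beta iota delta [cross3];
  (eapply dl_eq; [ dl_auto; apply Htow; lia | cbv beta; ring ]). Qed.

Lemma D_p t : derivable_pt_lim p t (dsigma t * m2 t * q t + dot3 (V2 t) (Zc t)).
Proof. eapply dl_eq. apply (dl_dot3 V2 B0 (fun k => dsigma t * m2 t * V3 t k - E t 2%nat 0%nat * Fd 1%nat t k) (Zc t)).
  apply D_V2. apply D_B0.
  transitivity (dsigma t * m2 t * q t + dot3 (V2 t) (Zc t) - E t 2%nat 0%nat * dot3 (Fd 1%nat t) (B0 t)).
  unfold q, dot3; ring. unfold B0; rewrite cross_perp1; ring. Qed.

Lemma D_q t : derivable_pt_lim q t (- dsigma t * m2 t * p t + dot3 (V3 t) (Zc t)).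
Proof. eapply dl_eq. apply (dl_dot3 V3 B0 (fun k => - dsigma t * m2 t * V2 t k - E t 3%nat 0%nat * Fd 1%nat t k) (Zc t)).
  apply D_V3. apply D_B0.
  transitivity (- dsigma t * m2 t * p t + dot3 (V3 t) (Zc t) - E t 3%nat 0%nat * dot3 (Fd 1%nat t) (B0 t)).
  unfold p, dot3; ring. unfold B0; rewrite cross_perp1; ring. Qed.

Let bet t := sqrt (dot3 (B0 t) (B0 t)).

Lemma D_bet t : derivable_pt_lim bet t (dot3 (Zc t) (B0 t) / bet t).
Proof. unfold bet. eapply dl_eq. apply dl_sqrt. apply (dl_dot3 B0 B0 (Zc t) (Zc t)); apply D_B0.
  apply bpos. unfold dot3. field. apply Rgt_not_eq, sqrt_lt_R0, bpos. Qed.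

Let Th t := ww t * torsion Fd t - dsigma t * m2 t.

Lemma bet2 t : bet t * bet t = dot3 (B0 t) (B0 t).
Proof. apply sqrt_sqrt, dot3_nonneg. Qed.
Lemma bet_pos t : 0 < bet t.
Proof. apply sqrt_lt_R0, bpos. Qed.

Lemma D_P t : derivable_pt_lim (fun s => p s / bet s) t (- Th t * (q t / bet t)).
Proof. eapply dl_eq. apply dl_div. apply D_p. apply D_bet. apply Rgt_not_eq, bet_pos.
  rewrite V2Z. unfold Th. rewrite <- bet2. pose proof (bet_pos t). field. lra. Qed.

Lemma D_Q t : derivable_pt_lim (fun s => q s / bet s) t (Th t * (p t / bet t)).
Proof. eapply dl_eq. apply dl_div. apply D_q. apply D_bet. apply Rgt_not_eq, bet_pos.
  rewrite V3Z. unfold Th. rewrite <- bet2. pose proof (bet_pos t). field. lra. Qed.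

Lemma Fd_cont n t i : (1 <= i <= 3)%nat -> continuity_pt (fun s => Fd n s i) t.
Proof. intros. eapply cp_dl. apply Htow; auto. Qed.

Let f2 := fun s => torsion Fd s * norm3 (Fd 1%nat s).

Lemma f2_eq s : f2 s = det3 (Fd 1%nat s) (Fd 2%nat s) (Fd 3%nat s) / dot3 (B0 s) (B0 s) * ww s.
Proof. unfold f2, torsion, norm3. fold (B0 s). rewrite pow2_sqrt by apply dot3_nonneg. reflexivity. Qed.

Lemma f2_cont t : continuity_pt f2 t.
Proof. replace f2 with (fun s => det3 (Fd 1%nat s) (Fd 2%nat s) (Fd 3%nat s) / dot3 (B0 s) (B0 s) * ww s)
    by (apply functional_extensionality; intros; rewrite f2_eq; auto).
  apply cp_mult. apply cp_div.
  - unfold det3, dot3, cross3; cbv beta iota.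
    repeat first [apply cp_plus | apply cp_minus | apply cp_mult | apply cp_opp | (apply Fd_cont; lia)].
  - unfold B0, dot3, cross3; cbv beta iota.
    repeat first [apply cp_plus | apply cp_minus | apply cp_mult | apply cp_opp | (apply Fd_cont; lia)].
  - apply Rgt_not_eq, bpos.
  - unfold ww. apply cp_sqrt. unfold dot3.
    repeat first [apply cp_plus | apply cp_minus | apply cp_mult | apply cp_opp | (apply Fd_cont; lia)].
    apply dot3_nonneg. Qed.

Lemma mu2_cont x : continuity_pt mu2 x.
Proof. destruct Hmu2 as [D [H0 H1]]. rewrite <- H0. eapply cp_dl. apply H1. Qed.

Lemma sig_mono a b : a <= b -> sigma a <= sigma b.
Proof. intros [H|H]; [|subst; lra].
  destruct (MVT_cor2 sigma dsigma a b H (fun c _ => Hsig c)) as [c [Hc _]]. pose proof (Hdsig c). nra. Qed.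

Lemma hL : 0 <= L. Proof. lra. Qed.
Lemma C2 : forall x, 0 <= x <= L -> continuity_pt f2 x. Proof. intros; apply f2_cont. Qed.
Lemma hs : sigma 0 <= sigma L. Proof. apply sig_mono; lra. Qed.
Lemma Cm : forall x, sigma 0 <= x <= sigma L -> continuity_pt mu2 x. Proof. intros; apply mu2_cont. Qed.

Let W := primitive hL (FTC_P1 hL C2).
Let M := primitive hs (FTC_P1 hs Cm).
Let Theta t := (W t - W 0) - (M (sigma t) - M (sigma 0)).

Lemma D_Theta t : 0 <= t <= L -> derivable_pt_lim Theta t (Th t).
Proof. intros Ht. unfold Theta. eapply dl_eq.
  { apply dl_minus. apply dl_minus. apply (RiemannInt_P28 hL C2 Ht). apply dl_const.
    apply dl_minus. apply (derivable_pt_lim_comp sigma M t (dsigma t) (mu2 (sigma t))). apply Hsig.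
    apply (RiemannInt_P28 hs Cm). split; apply sig_mono; lra. apply dl_const. }
  unfold Th, f2, m2, ww, norm3. ring. Qed.

Let K1 t := cos (Theta t) * (p t / bet t) + sin (Theta t) * (q t / bet t).
Let K2 t := - sin (Theta t) * (p t / bet t) + cos (Theta t) * (q t / bet t).

Lemma D_K1 t : 0 <= t <= L -> derivable_pt_lim K1 t 0.
Proof. intros Ht. unfold K1. eapply dl_eq.
  { apply dl_plus.
    - apply (dl_mult (fun s => cos (Theta s)) (fun s => p s / bet s)). apply dl_cos, D_Theta; auto. apply D_P.
    - apply (dl_mult (fun s => sin (Theta s)) (fun s => q s / bet s)). apply dl_sin, D_Theta; auto. apply D_Q. }
  ring. Qed.

Lemma D_K2 t : 0 <= t <= L -> derivable_pt_lim K2 t 0.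
Proof. intros Ht. unfold K2. eapply dl_eq.
  { apply dl_plus.
    - apply (dl_mult (fun s => - sin (Theta s)) (fun s => p s / bet s)). apply dl_opp, dl_sin, D_Theta; auto. apply D_P.
    - apply (dl_mult (fun s => cos (Theta s)) (fun s => q s / bet s)). apply dl_cos, D_Theta; auto. apply D_Q. }
  ring. Qed.

Lemma const_on (f : R -> R) : (forall t, 0 <= t <= L -> derivable_pt_lim f t 0) -> f L = f 0.
Proof. intros H. destruct (MVT_cor2 f (fun _ => 0) 0 L HL H) as [c [Hc _]]. lra. Qed.

Lemma B0_per t k : (1 <= k <= 3)%nat -> B0 (t + L) k = B0 t k.
Proof. intros Hk. unfold B0. destruct k as [|[|[|[|k]]]]; try lia; cbv beta iota delta [cross3];
  rewrite !perF by lia; auto. Qed.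

Lemma p_per t : p (t + L) = p t.
Proof. unfold p, dot3. rewrite !V2_per, !B0_per by lia. auto. Qed.
Lemma q_per t : q (t + L) = q t.
Proof. unfold q, dot3. rewrite !V3_per, !B0_per by lia. auto. Qed.
Lemma bet_per t : bet (t + L) = bet t.
Proof. unfold bet, dot3. rewrite !B0_per by lia. auto. Qed.

Lemma unit_pq t : (p t / bet t)^2 + (q t / bet t)^2 = 1.
Proof. pose proof (gram3 (Fd 1%nat t) (V2 t) (B0 t)) as G.
  rewrite <- wq in G. destruct (Vfacts t) as (a1&a2&a3&a4&a5).
  rewrite (dot3_sym (Fd 1%nat t) (V2 t)), a1, a3 in G.
  assert (HX : dot3 (Fd 1%nat t) (B0 t) = 0) by apply cross_perp1.
  rewrite (dot3_sym (B0 t) (Fd 1%nat t)), HX in G. fold (p t) in G.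
  assert (Hw : ww t * ww t = dot3 (Fd 1%nat t) (Fd 1%nat t)) by (apply sqrt_sqrt, dot3_nonneg).
  pose proof (wpos t) as Hw0. pose proof (bet_pos t) as Hb0. pose proof (bet2 t) as Hb2.
  assert (Hq2 : q t ^2 = dot3 (B0 t) (B0 t) - p t ^2).
  { apply (Rmult_eq_reg_l (ww t * ww t)); [|nra]. rewrite Hw at 2. nra. }
  rewrite <- Hb2 in Hq2. field_simplify; [|lra]. rewrite Hq2. field. lra. Qed.

Lemma final (p1 : Riemann_integrable mu2 (sigma 0) (sigma L))
  (p2 : Riemann_integrable (fun t => torsion Fd t * norm3 (Fd 1%nat t)) 0 L) :
  exists m : Z, RiemannInt p1 / (2 * PI) - RiemannInt p2 / (2 * PI) = IZR m.
Proof.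
  assert (HT : Theta L = RiemannInt p2 - RiemannInt p1).
  { assert (R2 : RiemannInt p2 = W L - W 0) by exact (RiemannInt_P20 hL (FTC_P1 hL C2) p2).
    assert (R1 : RiemannInt p1 = M (sigma L) - M (sigma 0)) by exact (RiemannInt_P20 hs (FTC_P1 hs Cm) p1).
    rewrite R1, R2. unfold Theta. ring. }
  assert (HT0 : Theta 0 = 0) by (unfold Theta; ring).
  pose proof (const_on K1 D_K1) as E1. pose proof (const_on K2 D_K2) as E2.
  unfold K1, K2 in E1, E2. rewrite HT0, cos_0, sin_0 in E1, E2.
  assert (Hp : p L = p 0) by (rewrite <- (Rplus_0_l L) at 1; apply p_per).
  assert (Hq : q L = q 0) by (rewrite <- (Rplus_0_l L) at 1; apply q_per).
  assert (Hb : bet L = bet 0) by (rewrite <- (Rplus_0_l L) at 1; apply bet_per).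
  rewrite Hp, Hq, Hb in E1, E2.
  pose proof (unit_pq 0) as U.
  set (P := p 0 / bet 0) in *. set (Q := q 0 / bet 0) in *.
  set (c := cos (Theta L)) in *. set (s := sin (Theta L)) in *.
  assert (A1 : (c - 1) * P + s * Q = 0) by lra.
  assert (A2 : - s * P + (c - 1) * Q = 0) by lra.
  assert (Kc : ((c - 1)^2 + s^2) * P = 0).
  { transitivity ((c - 1) * ((c - 1) * P + s * Q) - s * (- s * P + (c - 1) * Q)). ring. rewrite A1, A2; ring. }
  assert (Kd : ((c - 1)^2 + s^2) * Q = 0).
  { transitivity (s * ((c - 1) * P + s * Q) + (c - 1) * (- s * P + (c - 1) * Q)). ring. rewrite A1, A2; ring. }
  assert (Kk : (c - 1)^2 + s^2 = 0).
  { transitivity (((c - 1)^2 + s^2) * (P^2 + Q^2)). rewrite U; ring.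
    transitivity ((((c - 1)^2 + s^2) * P) * P + (((c - 1)^2 + s^2) * Q) * Q). ring.
    rewrite Kc, Kd; ring. }
  assert (Hc1 : c = 1) by nra.
  assert (Hs : sin (Theta L / 2) = 0).
  { pose proof (cos_2a_sin (Theta L / 2)). replace (2 * (Theta L / 2)) with (Theta L) in H by field.
    fold c in H. nra. }
  destruct (sin_eq_0_0 _ Hs) as [k Hk].
  exists (- k)%Z. rewrite opp_IZR.
  assert (RiemannInt p2 - RiemannInt p1 = 2 * IZR k * PI).
  { rewrite <- HT. replace (Theta L) with (2 * (Theta L / 2)) by field. rewrite Hk. ring. }
  pose proof PI_RGT_0. field_simplify; [|lra]. 
  replace (RiemannInt p1) with (RiemannInt p2 - 2 * IZR k * PI) by lra. field. lra. Qed.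
End Main.

Theorem mainTheorem3
  (Fd : nat -> R -> R3) (L : R) (dk : R -> R)
  (sigma dsigma mu1 mu2 : R -> R) (e : R -> frame) :
  (* F smooth, with derivative tower Fd (F = Fd 0) *)
  smooth_curve_tower Fd ->
  (* F periodic (closed) with period L, period interval I = [0, L] *)
  0 < L ->
  (forall (t : R) (i : nat), (1 <= i <= 3)%nat -> Fd 0%nat (t + L) i = Fd 0%nat t i) ->
  (* regular *)
  (forall t, norm3 (Fd 1%nat t) <> 0) ->
  (* nowhere vanishing Euclidean curvature *)
  (forall t, curvature Fd t <> 0) ->
  (* 1-generic: (k')^2 + k^2 tau^2 <> 0, with ' = d/ds_e = (1/|F_t|) d/dt *)
  (forall t, derivable_pt_lim (curvature Fd) t (dk t)) ->
  (forall t, (dk t / norm3 (Fd 1%nat t)) ^ 2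
             + (curvature Fd t) ^ 2 * (torsion Fd t) ^ 2 <> 0) ->
  (* s = sigma(t) is the conformal arclength (orientation preserving) *)
  is_smooth sigma ->
  (forall t, derivable_pt_lim sigma t (dsigma t)) ->
  (forall t, 0 < dsigma t) ->
  (* conformal curvatures mu1, mu2 and Frenet frame e : s -> Mob(3) *)
  is_smooth mu1 -> is_smooth mu2 ->
  (forall s, Mob3 (e s)) ->
  conformal_frenet e mu1 mu2 ->
  (* [e0] = f = chi o F *)
  (forall t, exists lam : R, lam <> 0 /\
      forall i : nat, (i <= 4)%nat -> e (sigma t) 0%nat i = lam * chi (Fd 0%nat t) i) ->
  (* conclusion: (1/2pi) int_I mu2 ds = (1/2pi) int_I tau ds_e  (mod Z) *)
  forall (p1 : Riemann_integrable mu2 (sigma 0) (sigma L))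
         (p2 : Riemann_integrable (fun t => torsion Fd t * norm3 (Fd 1%nat t)) 0 L),
  exists m : Z, RiemannInt p1 / (2 * PI) - RiemannInt p2 / (2 * PI) = IZR m.
Proof.
  intros Htow HL Hper Hreg Hcurv Hdk Hgen Hsmooth Hsig Hdsig Hmu1 Hmu2 Hmob Hfr Hbase p1 p2.
  exact (final Fd L sigma dsigma mu1 mu2 e Htow HL Hper Hreg Hcurv Hsig Hdsig Hmu2 Hmob Hfr Hbase p1 p2).
Qed.
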